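(* Let $R$ be a unital associative simple algebra over an infinite field $F$ and let $p\in F[x]$ be a nonconstant polynomial. Then $$\mathrm{span}_F\{ab-ba\mid a,b\in R\}\subseteq \mathrm{span}_F\{p(ab)-p(ba)\mid a,b\in R\}.$$
   Context: $\mathrm{span}_F$ denotes the $F$-linear span. *)

(* Defs.v *)
From HB Require Import structures.
From mathcomp Require Import all_boot all_order all_algebra.
Set Implicit Arguments. Unset Strict Implicit. Unset Printing Implicit Defensive.
Import Order.TTheory GRing.Theory Num.Theory.
Local Open Scope ring_scope.

Definition infinite_field (F : fieldType) : Prop :=
  forall s : seq F, exists x : F, x \notin s.

Definition alg_ideal (F : fieldType) (R : algType F) (I : R -> Prop) : Prop :=
  [/\ I 0,
      (forall x y, I x -> I y -> I (x + y)),
      (forall (k : F) x, I x -> I (k *: x)),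
      (forall r x, I x -> I (r * x)) &
      (forall r x, I x -> I (x * r))].

Definition simple_algebra (F : fieldType) (R : algType F) : Prop :=
  (1 : R) != 0 /\
  forall I : R -> Prop, alg_ideal I ->
    (forall x, I x -> x = 0) \/ (forall x, I x).

Definition span_F (F : fieldType) (R : algType F) (S : R -> Prop) : R -> Prop :=
  fun x => exists (n : nat) (c : 'I_n -> F) (v : 'I_n -> R),
    (forall i, S (v i)) /\ x = \sum_(i < n) c i *: v i.

(* Main.v *)
Require Import Defs.
From HB Require Import structures.
From mathcomp Require Import all_boot all_order all_algebra.
From mathcomp Require Import zify.
From Stdlib Require Import Classical.
Set Implicit Arguments. Unset Strict Implicit. Unset Printing Implicit Defensive.
Import GRing.Theory.
Local Open Scope ring_scope.


Definition closedP (F : fieldType) (R : lmodType F) (P : R -> Prop) :=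
  [/\ P 0, (forall x y, P x -> P y -> P (x + y)) & (forall (k : F) x, P x -> P (k *: x))].

Lemma closed_sum (F : fieldType) (R : lmodType F) (P : R -> Prop) n (f : 'I_n -> R) :
  closedP P -> (forall i, P (f i)) -> P (\sum_(i < n) f i).
Proof. by case=> P0 PD _ Hf; apply: (big_ind P) => // i _; apply: Hf. Qed.

Lemma closedN (F : fieldType) (R : lmodType F) (P : R -> Prop) x :
  closedP P -> P x -> P (- x).
Proof. by case=> _ _ PZ Px; rewrite -scaleN1r; apply: PZ. Qed.

Lemma closedB (F : fieldType) (R : lmodType F) (P : R -> Prop) x y :
  closedP P -> P x -> P y -> P (x - y).
Proof. by move=> cP Px Py; case: (cP) => _ PD _; apply: PD => //; apply: closedN. Qed.

Lemma span_closed (F : fieldType) (R : algType F) (S : R -> Prop) : closedP (span_F S).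
Proof.
split.
- by exists 0%N, (fun _ => 0), (fun _ => 0); split => [[]//|]; rewrite big_ord0.
- move=> x y [n1 [c1 [v1 [H1 ->]]]] [n2 [c2 [v2 [H2 ->]]]].
  exists (n1 + n2)%N, (fun i => match split i with inl j => c1 j | inr j => c2 j end),
    (fun i => match split i with inl j => v1 j | inr j => v2 j end); split.
    by move=> i; case: (split i).
  rewrite big_split_ord /=; congr (_ + _); apply: eq_bigr => i _.
    by have := unsplitK (inl i : 'I_n1 + 'I_n2) => /= ->.
  by have := unsplitK (inr i : 'I_n1 + 'I_n2) => /= ->.
- move=> k x [n [c [v [H ->]]]]; exists n, (fun i => k * c i), v; split => //.
  by rewrite scaler_sumr; apply: eq_bigr => i _; rewrite scalerA.
Qed.

Lemma span_sub (F : fieldType) (R : algType F) (S : R -> Prop) x : S x -> span_F S x.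
Proof.
move=> Sx; exists 1%N, (fun _ => 1), (fun _ => x); split => //.
by rewrite big_ord1 scale1r.
Qed.

Lemma span_ind (F : fieldType) (R : algType F) (S P : R -> Prop) x :
  closedP P -> (forall y, S y -> P y) -> span_F S x -> P x.
Proof.
move=> cP HS [n [c [v [Hv ->]]]]; apply: closed_sum => // i.
by case: cP => _ _ PZ; apply: PZ; apply: HS.
Qed.


Lemma inf_uniq (F : fieldType) : infinite_field F -> forall n, exists s : seq F, size s = n /\ uniq s.
Proof.
move=> inf; elim=> [|n [s [sz u]]]; first by exists [::].
have [x xs] := inf s; exists (x :: s); split; first by rewrite /= sz.
by rewrite /= xs u.
Qed.

Lemma extract (F : fieldType) (R : algType F) (P : R -> Prop) (G : {poly R}) :
  infinite_field F -> closedP P -> (forall t : F, P G.[t%:A]) -> forall i, P G`_i.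
Proof.
move=> inf cP HG i; set n := size G.
case: (ltnP i n) => [lt|ge]; last by rewrite nth_default //; case: cP.
have [s [sz us]] := inf_uniq inf n.
pose a : 'rV[F]_n := \row_(j < n) s`_j.
pose Vd := Vandermonde n a.
have Vu : Vd \in unitmx.
  rewrite unitmxE unitfE det_Vandermonde.
  apply: (big_ind (fun x : F => x != 0)) => //; first exact: oner_neq0.
    by move=> x y; apply: mulf_neq0.
  move=> j _; apply: (big_ind (fun x : F => x != 0)) => //; first exact: oner_neq0.
    by move=> x y; apply: mulf_neq0.
  move=> k jk; rewrite !mxE subr_eq0 nth_uniq ?sz //.
  by apply/eqP => /val_inj e; move: jk; rewrite e ltnn.
pose W := invmx Vd.
have Hev (j : 'I_n) : G.[(s`_j)%:A] = \sum_(l < n) Vd l j *: G`_l.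
  rewrite horner_coef; apply: eq_bigr => l _.
  by rewrite -(rmorphXn (in_alg R)) /= mulr_algr !mxE.
have -> : G`_i = \sum_(j < n) W j (Ordinal lt) *: G.[(s`_j)%:A].
  under eq_bigr => j _ do rewrite Hev scaler_sumr.
  rewrite exchange_big /=.
  under eq_bigr => l _ do (under eq_bigr => j _ do rewrite scalerA; rewrite -scaler_suml).
  have E l : \sum_(j < n) W j (Ordinal lt) * Vd l j = (Vd *m W) l (Ordinal lt).
    by rewrite mxE; apply: eq_bigr => j _; rewrite mulrC.
  under eq_bigr => l _ do rewrite E mulmxV // mxE.
  rewrite (bigD1 (Ordinal lt)) //= eqxx scale1r big1 ?addr0 // => l nl.
  by rewrite (negbTE nl) scale0r.
apply: closed_sum => // j; case: cP => _ _ PZ; exact: PZ.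
Qed.


Fixpoint Dk (R : pzRingType) (y h : R) (k : nat) : R :=
  match k with 0%N => 0 | k.+1 => y ^+ k * h + Dk y h k * y end.

Definition Apol (R : nzRingType) (y h : R) : {poly R} := y%:P + 'X * h%:P.

Lemma Apol0 (R : nzRingType) (y h : R) k : ((Apol y h) ^+ k)`_0 = y ^+ k.
Proof.
elim: k => [|k IH]; first by rewrite !expr0 coefC.
by rewrite exprSr coef0M IH /Apol coefD coefC /= -commr_polyX coefMX /= addr0 exprSr.
Qed.

Lemma Apol1 (R : nzRingType) (y h : R) k : ((Apol y h) ^+ k)`_1 = Dk y h k.
Proof.
elim: k => [|k IH]; first by rewrite expr0 coefC.
rewrite exprSr coefM big_ord_recr /= big_ord1 /= IH Apol0.
rewrite /Apol !coefD !coefC /= -commr_polyX !coefMX /= add0r addr0 addrC.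
by rewrite coefC addrC.
Qed.

Lemma comm_poly_alg (F : fieldType) (R : algType F) (G : {poly R}) (t : F) :
  comm_poly G t%:A.
Proof. by rewrite /comm_poly mulr_algl mulr_algr. Qed.

Lemma Apol_eval (F : fieldType) (R : algType F) (y h : R) (t : F) k :
  ((Apol y h) ^+ k).[t%:A] = (y + t *: h) ^+ k.
Proof.
rewrite horner_exp_comm; last exact: comm_poly_alg.
rewrite /Apol hornerD.
rewrite hornerC.
rewrite hornerM_comm; last exact: comm_poly_alg.
rewrite hornerC.
rewrite hornerX.
by rewrite mulr_algl.
Qed.

Lemma DkB (R : pzRingType) (y h1 h2 : R) k : Dk y h1 k - Dk y h2 k = Dk y (h1 - h2) k.
Proof.
elim: k => [|k IH] /=; first by rewrite subr0.
by rewrite -IH mulrBr mulrBl; rewrite opprD !addrA; congr (_ + _); rewrite addrAC.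
Qed.

Lemma Dk_comm (R : pzRingType) (x y : R) k : Dk y (x * y - y * x) k = x * y ^+ k - y ^+ k * x.
Proof.
elim: k => [|k IH] /=; first by rewrite !expr0 mulr1 mul1r subrr.
rewrite IH mulrBr mulrBl !mulrA -!exprSr -(mulrA x) -exprSr.
by rewrite addrC addrA subrK.
Qed.

Lemma horner_algE (F : fieldType) (R : algType F) (p : {poly F}) (z : R) :
  horner_alg z p = \sum_(i < size p) p`_i *: z ^+ i.
Proof.
rewrite /horner_alg /horner_morph (@horner_coef_wide _ (size p)) ?size_poly //.
apply: eq_bigr => i _; rewrite coef_map_id0 /=; first by rewrite -scalerAl mul1r.
by rewrite scale0r.
Qed.

Definition Epol (F : fieldType) (R : algType F) (p : {poly F}) (y h : R) : {poly R} :=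
  \sum_(i < size p) ((p`_i)%:A)%:P * (Apol y h) ^+ i.

Lemma Epol_eval (F : fieldType) (R : algType F) (p : {poly F}) (y h : R) (t : F) :
  (Epol p y h).[t%:A] = horner_alg (y + t *: h) p.
Proof.
rewrite horner_algE /Epol horner_sum; apply: eq_bigr => i _.
by rewrite hornerCM Apol_eval mulr_algl.
Qed.

Lemma Epol1 (F : fieldType) (R : algType F) (p : {poly F}) (y h : R) :
  (Epol p y h)`_1 = \sum_(i < size p) p`_i *: Dk y h i.
Proof.
rewrite /Epol coef_sum; apply: eq_bigr => i _.
by rewrite coefCM Apol1 mulr_algl.
Qed.


Definition Vsp (F : fieldType) (R : algType F) (p : {poly F}) : R -> Prop :=
  span_F (fun y : R => exists a b : R,
               y = horner_alg (a * b) p - horner_alg (b * a) p).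

Lemma V_comm_hp (F : fieldType) (R : algType F) (p : {poly F}) (x y : R) :
  infinite_field F -> Vsp p (x * horner_alg y p - horner_alg y p * x).
Proof.
move=> inf.
have -> : x * horner_alg y p - horner_alg y p * x =
          (Epol p y (x * y) - Epol p y (y * x))`_1.
  rewrite coefB !Epol1 -sumrB !horner_algE mulr_sumr mulr_suml -sumrB.
  apply: eq_bigr => i _; rewrite -scalerBr DkB Dk_comm scalerBr.
  by rewrite -scalerAr -scalerAl.
apply: (extract inf (span_closed _)) => t.
rewrite hornerD hornerN !Epol_eval; apply: span_sub.
exists (1 + t *: x), y; congr (horner_alg _ _ - horner_alg _ _).
  by rewrite mulrDl mul1r -scalerAl.
by rewrite mulrDr mulr1 -scalerAr.
Qed.

Lemma V_lie (F : fieldType) (R : algType F) (p : {poly F}) (z v : R) :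
  infinite_field F -> Vsp p v -> Vsp p (z * v - v * z).
Proof.
move=> inf Vv.
have cl : closedP (fun v : R => Vsp p (z * v - v * z)).
  have [V0 VD VZ] := span_closed (fun y : R => exists a b : R,
               y = horner_alg (a * b) p - horner_alg (b * a) p).
  split.
  - by rewrite mulr0 mul0r subrr.
  - move=> a b Ha Hb; rewrite mulrDr mulrDl opprD addrACA; exact: VD.
  - by move=> k a Ha; rewrite -scalerAr -scalerAl -scalerBr; apply: VZ.
apply: (span_ind cl _ Vv) => _ [a [b ->]].
rewrite mulrBr mulrBl opprD addrACA -opprD.
apply: (closedB (span_closed _)); first by apply: V_comm_hp.
exact: (V_comm_hp _ _ _ inf).
Qed.


Definition cm (R : pzRingType) (x y : R) := x * y - y * x.

Lemma cmD (R : pzRingType) (a x y : R) : cm a (x + y) = cm a x + cm a y.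
Proof. by rewrite /cm mulrDr mulrDl opprD addrACA. Qed.

Lemma cmN (R : pzRingType) (a x : R) : cm a (- x) = - cm a x.
Proof. by rewrite /cm mulrN mulNr opprK opprB addrC. Qed.

Lemma cmB (R : pzRingType) (a x y : R) : cm a (x - y) = cm a x - cm a y.
Proof. by rewrite cmD cmN. Qed.

Lemma cmC (R : pzRingType) (x y : R) : cm x y = - cm y x.
Proof. by rewrite /cm opprB. Qed.

Lemma cmM (R : pzRingType) (a x y : R) : cm a (x * y) = cm a x * y + x * cm a y.
Proof. by rewrite /cm mulrBl mulrBr !mulrA addrA subrK. Qed.

Lemma cmZ (F : fieldType) (R : algType F) (a x : R) (k : F) : cm a (k *: x) = k *: cm a x.
Proof. by rewrite /cm -scalerAr -scalerAl scalerBr. Qed.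

Lemma cmMl (R : pzRingType) (a b r : R) : cm (a * b) r = cm a (b * r) + cm b (r * a).
Proof. by rewrite /cm !mulrA addrA subrK. Qed.

Lemma cm_jacobi (R : pzRingType) (a s r : R) : cm (cm a s) r = cm a (cm s r) - cm s (cm a r).
Proof.
rewrite [cm s r]/cm [cm a r]/cm !cmB /cm.
rewrite !mulrBl !mulrBr !mulrA.
set A := a * s * r; set B := s * a * r; set C := r * a * s; set D := r * s * a.
set E := a * r * s; set G := s * r * a.
rewrite ?opprB ?opprD ?opprK ?addrA.
rewrite (addrAC (A - G + D) (- E) G) (addrAC (A - G) D G) subrK.
rewrite (addrAC (A + D - E) (- C) E) subrK.
by rewrite (addrAC A (- B) D) (addrAC (A + D) (- B) (- C)).
Qed.

Definition lieP (F : fieldType) (R : algType F) (V : R -> Prop) := forall z v, V v -> V (cm z v).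
Definition Tset (F : fieldType) (R : algType F) (V : R -> Prop) (x : R) := forall r, V (cm x r).

Lemma T_closed (F : fieldType) (R : algType F) (V : R -> Prop) :
  closedP V -> closedP (Tset V).
Proof.
move=> [V0 VD VZ]; split.
- by move=> r; rewrite /cm mulr0 mul0r subrr.
- move=> x y Hx Hy r; rewrite cmC cmD opprD -!cmC; exact: VD.
- move=> k x Hx r; rewrite cmC cmZ -scalerN -cmC; exact: VZ.
Qed.

Lemma T_mul (F : fieldType) (R : algType F) (V : R -> Prop) (a b : R) :
  closedP V -> Tset V a -> Tset V b -> Tset V (a * b).
Proof. by move=> [_ VD _] Ha Hb r; rewrite cmMl; apply: VD. Qed.

Lemma T_lie (F : fieldType) (R : algType F) (V : R -> Prop) (a s : R) :
  closedP V -> lieP V -> Tset V a -> Tset V (cm a s).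
Proof.
move=> cV lV Ha r; rewrite cm_jacobi; apply: (closedB cV) => //.
exact: lV.
Qed.

Lemma prime_simple (F : fieldType) (R : algType F) (u v : R) :
  simple_algebra R -> (forall s, u * s * v = 0) -> u = 0 \/ v = 0.
Proof.
move=> [_ sR] H.
have I : alg_ideal (fun x : R => forall s, x * s * v = 0).
  split.
  - by move=> s; rewrite !mul0r.
  - by move=> x y Hx Hy s; rewrite mulrDl mulrDl Hx Hy addr0.
  - by move=> k x Hx s; rewrite -scalerAl -scalerAl (Hx s) scaler0.
  - by move=> r x Hx s; rewrite -!mulrA (mulrA x) Hx mulr0.
  - by move=> r x Hx s; rewrite -(mulrA x) Hx.
case: (sR _ I) => [/(_ u H) -> | /(_ 1) h]; first by left.
by right; have := h 1; rewrite !mul1r.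
Qed.

Lemma caseA (F : fieldType) (R : algType F) (V : R -> Prop) (a b : R) :
  simple_algebra R -> closedP V -> lieP V -> Tset V a -> Tset V b -> cm a b != 0 ->
  forall x y, V (cm x y).
Proof.
move=> [nz1 sR] cV lV Ha Hb cnz.
have cT := T_closed cV.
set c := cm a b.
have Hcr r : Tset V (c * r).
  have -> : c * r = cm a (b * r) - b * cm a r by rewrite cmM addrK.
  apply: (closedB cT); first exact: T_lie.
  by apply: T_mul => //; apply: T_lie.
have Hscr s r : Tset V (s * c * r).
  have -> : s * c * r = c * (r * s) - cm (c * r) s.
    by rewrite /cm opprB !mulrA addrC subrK.
  apply: (closedB cT); first exact: Hcr.
  by apply: T_lie => //; apply: Hcr.
have I : alg_ideal (fun x : R => forall s r, Tset V (s * x * r)).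
  split.
  - by move=> s r; rewrite mulr0 mul0r; case: cT.
  - by move=> x y Hx Hy s r; rewrite mulrDr mulrDl; case: cT => _ TD _; apply: TD.
  - by move=> k x Hx s r; rewrite -scalerAr -scalerAl; case: cT => _ _ TZ; apply: TZ.
  - by move=> r x Hx s r'; rewrite mulrA.
  - by move=> r x Hx s r'; rewrite mulrA -(mulrA (s * x)); apply: Hx.
case: (sR _ I) => [/(_ c Hscr) c0 | h]; first by move: cnz; rewrite -/c c0 eqxx.
by move=> x y; have := h x 1 1 y; rewrite mul1r mulr1.
Qed.


Definition Zc (R : pzRingType) (z : R) := forall r, z * r = r * z.

Lemma Zc_closed (F : fieldType) (R : algType F) : closedP (@Zc R).
Proof.
split.
- by move=> r; rewrite mul0r mulr0.
- by move=> x y Hx Hy r; rewrite mulrDl mulrDr Hx Hy.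
- by move=> k x Hx r; rewrite -scalerAl -scalerAr Hx.
Qed.

Lemma two_cancel (F : fieldType) (R : algType F) (x : R) :
  (2%:R : F) != 0 -> x *+ 2 = 0 -> x = 0.
Proof.
move=> n2 h; have : (2%:R : F) *: x = 0 by rewrite scaler_nat.
by move/eqP; rewrite scaler_eq0 (negbTE n2) /= => /eqP.
Qed.

Lemma char2_opp (F : fieldType) (R : algType F) (x : R) :
  (2%:R : F) = 0 -> - x = x.
Proof.
move=> h; apply/eqP; rewrite eq_sym -addr_eq0.
by rewrite -mulr2n -scaler_nat h scale0r.
Qed.

Lemma D2_central (F : fieldType) (R : algType F) (a : R) :
  simple_algebra R -> (2%:R : F) != 0 -> (forall r, cm a (cm a r) = 0) -> Zc a.
Proof.
move=> sR n2 D2.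
have P r s : cm a r * cm a s = 0.
  apply: (two_cancel n2).
  have := D2 (r * s); rewrite cmM cmD !cmM D2 D2 mul0r mulr0 add0r addr0.
  by rewrite mulr2n.
have Q r s t : cm a r * s * cm a t = 0.
  rewrite -mulrA.
  have -> : s * cm a t = cm a (s * t) - cm a s * t by rewrite cmM (addrC (cm a s * t)) addrK.
  by rewrite mulrBr P mulrA P mul0r subrr.
move=> r; have [h|h] := prime_simple sR (Q r ^~ r).
  by apply/eqP; rewrite -subr_eq0; apply/eqP.
by apply/eqP; rewrite -subr_eq0; apply/eqP.
Qed.

Lemma D2_sq_central (F : fieldType) (R : algType F) (a : R) :
  (2%:R : F) = 0 -> (forall r, cm a (cm a r) = 0) -> Zc (a * a).
Proof.
move=> h2 D2 r; have := D2 r; rewrite /cm mulrBr mulrBl !mulrA.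
set X := a * r * a.
rewrite (char2_opp X h2) opprB addrA (addrAC _ X) addrK.
by move/eqP; rewrite addr_eq0 => /eqP ->; apply: char2_opp.
Qed.

Lemma Zc_unscale (F : fieldType) (R : algType F) (k : F) (x : R) :
  k != 0 -> Zc (k *: x) -> Zc x.
Proof.
move=> kn h; have -> : x = k^-1 *: (k *: x) by rewrite scalerA mulVf // scale1r.
by case: (Zc_closed R) => _ _ ZZ; apply: ZZ.
Qed.

Lemma pow_central (F : fieldType) (R : algType F) (q : {poly F}) :
  infinite_field F -> (1 < size q)%N -> (forall y : R, Zc (horner_alg y q)) ->
  forall y : R, Zc (y ^+ (size q).-1).
Proof.
move=> inf sq Hq y.
pose G : {poly R} := \poly_(i < size q) (q`_i *: y ^+ i).
have HG t : Zc G.[t%:A].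
  have -> : G.[t%:A] = horner_alg (t *: y) q.
    rewrite horner_poly horner_algE; apply: eq_bigr => i _.
    rewrite -(rmorphXn (in_alg R)) /= -scalerAr mulr1 exprZn !scalerA.
    by rewrite mulrC.
  exact: Hq.
have := extract inf (Zc_closed R) HG (size q).-1.
rewrite coef_poly prednK ?(ltnW sq) // leqnn => h.
apply: (Zc_unscale _ h).
have q0 : q != 0 by rewrite -size_poly_eq0 -lt0n (ltnW sq).
by rewrite -lead_coefE lead_coef_eq0.
Qed.


Lemma commXX (A : nzRingType) (u w : A) n : GRing.comm u w -> GRing.comm (u ^+ n) (w ^+ n).
Proof.
move=> c; apply: commrX; apply/esym; apply: commrX; exact/esym.
Qed.

Lemma frob_pow (A : nzRingType) p v (u w : A) :
  p \in [pchar A] -> GRing.comm u w -> (u + w) ^+ (p ^ v) = u ^+ (p ^ v) + w ^+ (p ^ v).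
Proof.
move=> pc c; elim: v => [|v IH]; first by rewrite expn0 !expr1.
rewrite expnSr !exprM IH.
have := pFrobenius_autD_comm pc (commXX (p ^ v) c).
by rewrite !pFrobenius_autE.
Qed.

Definition QP (A : nzRingType) (Q : nat) := Q = 1%N \/ exists p v, p \in [pchar A] /\ Q = (p ^ v)%N.

Lemma frobQ (A : nzRingType) Q (u w : A) : QP A Q -> GRing.comm u w ->
  (u + w) ^+ Q = u ^+ Q + w ^+ Q.
Proof.
move=> [->|[p [v [pc ->]]]] c; first by rewrite !expr1.
exact: frob_pow.
Qed.

Lemma pchar_alg (F : fieldType) (R : algType F) p : p \in [pchar F] -> p \in [pchar R].
Proof.
move=> pc; rewrite inE (pcharf_prime pc) /=.
have : (p%:R : F) *: (1 : R) = 0 by rewrite (pcharf0 pc) scale0r.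
by rewrite scaler_nat => ->.
Qed.

Lemma char_split (F : fieldType) (R : algType F) m : (0 < m)%N ->
  exists Q m', [/\ (0 < Q)%N, m = (Q * m')%N, (m'%:R : F) != 0, QP R Q & QP {poly R} Q].
Proof.
move=> m0.
case: (boolP ((m%:R : F) == 0)) => [mz|mnz]; last first.
  by exists 1%N, m; split => //; [rewrite mul1n | left | left].
have [p pc] := natf0_pchar m0 mz.
have pr := pcharf_prime pc.
set v := logn p m.
exists (p ^ v)%N, (m %/ p ^ v)%N; split.
- by rewrite expn_gt0 prime_gt0.
- by rewrite mulnC divnK // pfactor_dvdnn.
- rewrite -(dvdn_pcharf pc); apply/negP => /dvdnP [k hk].
  have : (p ^ v.+1 %| m)%N.
    by rewrite -(divnK (pfactor_dvdnn p m)) hk expnSr -mulnA mulnC dvdn_mull.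
  by rewrite pfactor_dvdn // ltnn.
- by right; exists p, v; split => //; apply: pchar_alg.
- by right; exists p, v; split => //; rewrite pchar_poly; apply: pchar_alg.
Qed.

Lemma Bpol0 (R : nzRingType) Q (z : R) n : (0 < Q)%N ->
  ((1 + 'X ^+ Q * z%:P) ^+ n)`_0 = 1.
Proof.
move=> Q0; elim: n => [|n IH]; first by rewrite expr0 coefC.
by rewrite exprSr coef0M IH mul1r coefD coefC coef0M coefXn (ltn_eqF Q0) mul0r addr0.
Qed.

Lemma BpolQ (R : nzRingType) Q (z : R) n : (0 < Q)%N ->
  ((1 + 'X ^+ Q * z%:P) ^+ n)`_Q = z *+ n.
Proof.
move=> Q0; elim: n => [|n IH].
  by rewrite expr0 coefC; case: Q Q0.
rewrite exprSr mulrDr mulr1 coefD IH mulrA.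
rewrite (commr_polyXn ((1 + 'X^Q * z%:P) ^+ n) Q) -mulrA coefXnM ltnn subnn.
by rewrite coefMC Bpol0 // mul1r mulrS addrC.
Qed.

Lemma powQ_central (F : fieldType) (R : algType F) m :
  infinite_field F -> (0 < m)%N -> (forall y : R, Zc (y ^+ m)) ->
  exists Q, [/\ (0 < Q)%N, QP R Q, QP {poly R} Q & forall x : R, Zc (x ^+ Q)].
Proof.
move=> inf m0 Hm.
have [Q [m' [Q0 em m'0 QR QRP]]] := char_split R m0.
exists Q; split => // x.
pose G : {poly R} := (1 + 'X ^+ Q * (x ^+ Q)%:P) ^+ m'.
have HG t : Zc G.[t%:A].
  have -> : G.[t%:A] = (1 + t *: x) ^+ m.
    rewrite horner_exp_comm; last exact: comm_poly_alg.
    rewrite hornerD hornerM_comm; last exact: comm_poly_alg.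
    rewrite hornerC hornerXn -(rmorphXn (in_alg R)) /= -scalerAl mul1r.
    rewrite em exprM (frobQ QR); last exact/esym/commr1.
    by rewrite expr1n exprZn hornerC.
  exact: Hm.
have := extract inf (Zc_closed R) HG Q.
rewrite BpolQ // -scaler_nat; apply: Zc_unscale.
exact: m'0.
Qed.


Lemma central_inv (F : fieldType) (R : algType F) (z : R) :
  simple_algebra R -> Zc z -> z != 0 -> exists w, [/\ z * w = 1, w * z = 1 & Zc w].
Proof.
move=> [nz1 sR] Zz zn.
have I : alg_ideal (fun x : R => exists r, x = z * r).
  split.
  - by exists 0; rewrite mulr0.
  - by move=> x y [r1 ->] [r2 ->]; exists (r1 + r2); rewrite mulrDr.
  - by move=> k x [r ->]; exists (k *: r); rewrite scalerAr.
  - by move=> r x [r1 ->]; exists (r * r1); rewrite mulrA -Zz mulrA.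
  - by move=> r x [r1 ->]; exists (r1 * r); rewrite mulrA.
case: (sR _ I) => [/(_ z) h | /(_ 1) [w /esym hw]].
  by have := h (ex_intro _ 1 (esym (mulr1 z))) => z0; rewrite z0 eqxx in zn.
have wz : w * z = 1 by rewrite -Zz.
exists w; split => // r.
by rewrite -[w * r]mulr1 -hw mulrA -(mulrA w r z) -Zz (mulrA w z r) wz mul1r.
Qed.

Lemma linv_nil (R : pzRingType) (u y : R) n : u * y = 1 -> y ^+ n = 0 -> (1 : R) = 0.
Proof.
move=> uy yn.
have h k : u ^+ k * y ^+ k = 1.
  elim: k => [|k IH]; first by rewrite !expr0 mulr1.
  by rewrite exprSr exprS -mulrA (mulrA u) uy mul1r.
by rewrite -(h n) yn mulr0.
Qed.

Lemma rinv_nil (R : pzRingType) (u y : R) n : y * u = 1 -> y ^+ n = 0 -> (1 : R) = 0.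
Proof.
move=> uy yn.
have h k : y ^+ k * u ^+ k = 1.
  elim: k => [|k IH]; first by rewrite !expr0 mulr1.
  by rewrite exprSr exprS -mulrA (mulrA y) uy mul1r.
by rewrite -(h n) yn mul0r.
Qed.

Lemma unit_or_nil (F : fieldType) (R : algType F) Q (y : R) :
  simple_algebra R -> (forall x : R, Zc (x ^+ Q)) -> (0 < Q)%N ->
  y ^+ Q = 0 \/ exists u, u * y = 1 /\ y * u = 1.
Proof.
move=> sR HQ Q0.
case: (eqVneq (y ^+ Q) 0) => [|yn]; first by left.
right; have [w [h1 h2 Zw]] := central_inv sR (HQ y) yn.
have eQ : y ^+ Q = y ^+ Q.-1 * y by rewrite -exprSr prednK.
have eQ' : y ^+ Q = y * y ^+ Q.-1 by rewrite -exprS prednK.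
exists (y ^+ Q.-1 * w); split.
  by rewrite -mulrA Zw mulrA -eQ.
by rewrite mulrA -eQ'.
Qed.

Lemma division (F : fieldType) (R : algType F) Q :
  simple_algebra R -> (forall x : R, Zc (x ^+ Q)) -> (0 < Q)%N ->
  forall y : R, y != 0 -> exists u, u * y = 1 /\ y * u = 1.
Proof.
move=> sR HQ Q0.
have [nz1 sR'] := sR.
have N1 : forall y : R, y ^+ Q = 0 -> forall r, (r * y) ^+ Q = 0.
  move=> y yQ r; case: (unit_or_nil (r * y) sR HQ Q0) => // [[u [h _]]].
  by move: h; rewrite mulrA => /linv_nil /(_ yQ) h1; rewrite h1 eqxx in nz1.
have N2 : forall y : R, y ^+ Q = 0 -> forall r, (y * r) ^+ Q = 0.
  move=> y yQ r; case: (unit_or_nil (y * r) sR HQ Q0) => // [[u [_ h]]].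
  by move: h; rewrite -mulrA => /rinv_nil /(_ yQ) h1; rewrite h1 eqxx in nz1.
have I : alg_ideal (fun y : R => y ^+ Q = 0).
  split.
  - by rewrite expr0n eqn0Ngt Q0.
  - move=> y1 y2 h1 h2.
    case: (unit_or_nil (y1 + y2) sR HQ Q0) => // [[u [h _]]].
    have x1 := N1 _ h1 u; have x2 := N1 _ h2 u.
    have e : u * y2 = 1 - u * y1 by rewrite -h mulrDr addrC addKr.
    have : (u * y2) * (\sum_(i < Q) (u * y1) ^+ i) = 1.
      have := subrXX_comm Q (esym (commr1 (u * y1))).
      rewrite expr1n x1 subr0 => E1.
      rewrite e [in RHS]E1; congr (_ * _).
      by under [RHS]eq_bigr => i _ do rewrite expr1n mul1r.
    by move/rinv_nil /(_ x2) => h0; rewrite h0 eqxx in nz1.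
  - by move=> k y h; rewrite exprZn h scaler0.
  - by move=> r y h; apply: N1.
  - by move=> r y h; apply: N2.
case: (sR' _ I) => [h | h] y yn.
  case: (unit_or_nil y sR HQ Q0) => // /h y0; by rewrite y0 eqxx in yn.
by have := h 1; rewrite expr1n => h0; rewrite h0 eqxx in nz1.
Qed.


Lemma iter_cm (R : nzRingType) (a y : R) k :
  iter k (cm a) y = ((a%:P - 'X) ^+ k * y%:P).[a].
Proof.
elim: k => [|k IH]; first by rewrite expr0 mul1r hornerC.
rewrite iterS IH exprS -mulrA mulrBl hornerD hornerN hornerCM.
by rewrite -commr_polyX hornerMX.
Qed.

Lemma neg1Q (A : nzRingType) Q : QP A Q -> (0 < Q)%N -> (-1 : A) ^+ Q = -1.
Proof.
move=> QA Q0; have := frobQ (u := 1 : A) (w := -1) QA (esym (commr1 _)).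
rewrite subrr expr0n eqn0Ngt Q0 expr1n /= => /eqP; rewrite eq_sym addr_eq0.
by move/eqP => h; apply: oppr_inj; rewrite opprK -h.
Qed.

Lemma iter_cmQ (R : nzRingType) (a y : R) Q : QP {poly R} Q -> (0 < Q)%N ->
  iter Q (cm a) y = a ^+ Q * y - y * a ^+ Q.
Proof.
move=> hQ Q0; rewrite iter_cm (frobQ hQ); last exact/commrN/commr_polyX.
rewrite -mulN1r exprMn_comm; last exact: (esym (commrN1 _)).
rewrite neg1Q // mulN1r mulrDl hornerD mulNr hornerN -polyC_exp hornerCM hornerC.
rewrite -(commr_polyXn (y%:P) Q) hornerM_comm ?hornerC ?hornerXn //.
by apply: comm_poly_exp; apply: comm_polyX.
Qed.

Lemma exists_sq0 (R : zmodType) (f : R -> R) n b : f 0 = 0 ->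
  iter n f b = 0 -> f b != 0 -> exists y, f y != 0 /\ f (f y) = 0.
Proof.
move=> f0; elim: n b => [|n IH] b; first by move=> /= ->; rewrite f0 eqxx.
rewrite iterSr => h fb.
case: (eqVneq (f (f b)) 0) => [e|ne]; first by exists b.
exact: (IH (f b)).
Qed.

Lemma all_comm (F : fieldType) (R : algType F) Q :
  simple_algebra R -> (0 < Q)%N -> QP R Q -> QP {poly R} Q ->
  (forall x : R, Zc (x ^+ Q)) -> forall a b : R, a * b = b * a.
Proof.
move=> sR Q0 QR QRP HQ a b.
case: (eqVneq (cm a b) 0) => [/eqP|ne]; first by rewrite subr_eq0 => /eqP.
have [nz1 _] := sR.
exfalso.
have iQ : iter Q (cm a) b = 0 by rewrite iter_cmQ // HQ subrr.
have f0 : cm a 0 = 0 by rewrite /cm mulr0 mul0r subrr.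
have [y [wn w0]] := exists_sq0 f0 iQ ne.
set w := cm a y in wn w0.
have [wi [h1 h2]] := division sR HQ Q0 wn.
have aw : a * w = w * a by apply/eqP; rewrite -subr_eq0; apply/eqP.
have awi : a * wi = wi * a.
  by rewrite -[wi * a]mulr1 -h2 mulrA -(mulrA wi a w) aw mulrA h1 mul1r.
set c := y * wi.
have ac : cm a c = 1.
  rewrite /c cmM -/w h2.
  by rewrite /cm awi subrr mulr0 addr0.
set x := a * c.
have xa : x * a = a * (x - 1).
  have : c * a = a * c - 1 by rewrite -ac /cm opprB addrC subrK.
  by rewrite /x -mulrA => ->; rewrite mulrBr mulr1.
have xk k : x ^+ k * a = a * (x - 1) ^+ k.
  elim: k => [|k IH]; first by rewrite !expr0 mul1r mulr1.
  by rewrite exprSr -mulrA xa mulrA IH -mulrA -exprSr.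
have := xk Q; rewrite (frobQ QR); last exact: commrN1.
rewrite neg1Q // HQ mulrBr mulr1 => /eqP.
rewrite -subr_eq0 opprB addrC subrK => /eqP a0.
by move: ne; rewrite a0 /cm mul0r mulr0 subrr eqxx.
Qed.


Lemma all_cm_in_V (F : fieldType) (R : algType F) (p : {poly F}) :
  infinite_field F -> simple_algebra R -> (1 < size p)%N ->
  forall a b : R, Vsp p (cm a b).
Proof.
move=> inf sR sp.
have cV := span_closed (fun y : R => exists a b : R,
               y = horner_alg (a * b) p - horner_alg (b * a) p).
have lV : lieP (Vsp p (R := R)) by move=> z v Vv; apply: V_lie.
case: (classic (exists a b : R, [/\ Tset (Vsp p) a, Tset (Vsp p) b & cm a b != 0])).
  by move=> [a [b [Ha Hb nz]]]; apply: (caseA sR cV lV Ha Hb nz).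
move=> nex.
have Tc (a b : R) : Tset (Vsp p) a -> Tset (Vsp p) b -> a * b = b * a.
  move=> Ha Hb; case: (eqVneq (cm a b) 0) => [/eqP|ne]; first by rewrite subr_eq0 => /eqP.
  by exfalso; apply: nex; exists a, b.
have Thp (y : R) : Tset (Vsp p) (horner_alg y p).
  move=> r; rewrite cmC; apply: (closedN cV); exact: V_comm_hp.
have D2 (y r : R) : cm (horner_alg y p) (cm (horner_alg y p) r) = 0.
  apply/eqP; rewrite subr_eq0; apply/eqP; apply: Tc => //.
  exact: T_lie.
have [q [sq Hq]] : exists q : {poly F}, (1 < size q)%N /\ forall y : R, Zc (horner_alg y q).
  case: (eqVneq (2%:R : F) 0) => [h2|n2].
    exists (p * p); split.
      have p0 : p != 0 by rewrite -size_poly_eq0 -lt0n (ltnW sp).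
      by rewrite size_mul //; case: (size p) sp => [|[|n]] // _; rewrite addSn /= addSn ltnS addnS.
    move=> y; rewrite rmorphM /=; exact: D2_sq_central.
  by exists p; split => // y; apply: D2_central.
have m0 : (0 < (size q).-1)%N by case: (size q) sq => [|[|n]].
have [Q [Q0 QR QRP HQ]] := powQ_central inf m0 (pow_central inf sq Hq).
move=> a b; rewrite /cm (all_comm sR Q0 QR QRP HQ a b) subrr.
by case: cV.
Qed.

Unset Implicit Arguments.
Set Strict Implicit.

Theorem corollary4p9 (F : fieldType) (R : algType F) (p : {poly F}) :
  infinite_field F -> simple_algebra R -> (1 < size p)%N ->
  forall x : R,
    span_F (fun y : R => exists a b : R, y = a * b - b * a) x ->
    span_F (fun y : R => exists a b : R,
               y = horner_alg (a * b) p - horner_alg (b * a) p) x.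
Proof.
move=> inf sR sp x Hx.
apply: (span_ind (span_closed _) _ Hx) => _ [a [b ->]].
exact: (all_cm_in_V inf sR sp a b).
Qed.
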